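(* Let $K$ be a finite set with $|K|=N$, let $\mathcal S$ be a finite collection of nonempty subsets of $K$, let $\mathbf r=\{r^{(S)}:S\in\mathcal S\}$ be an online rule associated to $\mathcal S$, and let $\lambda>1$. Let $y\in\mathbb R^K$ be arbitrary (no probabilistic assumption) and let $\rho$ be any ordering of $K$. Let $\hat y\in\mathbb R^K$ be the output of the aggregation algorithm $\mathcal A(\mathbf r,\mathcal S,\lambda)$ run on $y$ revealed in the order $\rho$, and let $\hat y^{(S)}\in\mathbb R^S$ be the predictions of expert $S$. Then for every $S\in\mathcal S$, $$\sum_{s\in S}(y_s-\hat y_s)^2\le \sum_{s\in S}\big(y_s-\hat y^{(S)}_s\big)^2+8\lambda^2\log\big(e|\mathcal S|\big)+2\|y_S-\Pi_\lambda y_S\|^2+4\lambda^2\sum_{s\in S}\mathbf 1(|y_s|>\lambda).$$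
   Context: An ordering of $K$ is a bijection $\rho:[N]\to K$; write $\rho[a:b]=\{\rho(a),\dots,\rho(b)\}$ (empty if $b<a$). For $A\subset K$ and $z\in\mathbb R^K$, $z_A\in\mathbb R^A$ is the restriction. An online rule $r^{(S)}$ for a set $S$ is a family of measurable maps $r^{(S)}_{U,s}:\mathbb R^U\to\mathbb R$ indexed by $U\subset S$ and $s\in S\setminus U$; an online rule $\mathbf r$ associated to $\mathcal S$ is a choice of such a rule for every $S\in\mathcal S$. Given an ordering $\rho$ and data $y$, expert $S$ predicts at each $\rho(t)\in S$ the value $\hat y^{(S)}_{\rho(t)}=r^{(S)}_{\rho[1:t-1]\cap S,\,\rho(t)}\big(y_{\rho[1:t-1]\cap S}\big)$; this defines $\hat y^{(S)}\in\mathbb R^S$. Truncation: $T_\lambda(x)=\min\{\max\{x,-\lambda\},\lambda\}$, and for a vector $z\in\mathbb R^A$, $(\Pi_\lambda z)_a=T_\lambda(z_a)$ (the $\ell^2$-projection onto the $\ell^\infty$-ball of radius $\lambda$). Aggregation algorithm $\mathcal A(\mathbf r,\mathcal S,\lambda)$: set $\alpha=1/(8\lambda^2)$ and $w_{S,1}=1/|\mathcal S|$ for all $S\in\mathcal S$. For $t=1,\dots,N$: (1) $\rho(t)$ is revealed; (2) the active set is $A_t=\{S\in\mathcal S:\rho(t)\in S \text{ and } \rho(t')\in S\text{ for some }t'<t\}$ if $t>1$, and $A_1=\{S\in\mathcal S:\rho(1)\in S\}$; (3) predict $\hat y_{\rho(t)}=\sum_{S\in A_t}\hat w_{S,t}\,T_\lambda(\hat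 y^{(S)}_{\rho(t)})$ with $\hat w_{S,t}=w_{S,t}/\sum_{S'\in A_t}w_{S',t}$ (an empty sum is $0$); (4) after $y_{\rho(t)}$ is revealed, set $w_{S,t+1}=w_{S,t}$ for $S\notin A_t$ and, for $S\in A_t$, $w_{S,t+1}=\dfrac{w_{S,t}e^{-\alpha\ell_{S,t}}}{\sum_{S'\in A_t}w_{S',t}e^{-\alpha\ell_{S',t}}}\sum_{S'\in A_t}w_{S',t}$, where $\ell_{S,t}=\big(T_\lambda(y_{\rho(t)})-T_\lambda(\hat y^{(S)}_{\rho(t)})\big)^2$. The output is $\hat y=(\hat y_s)_{s\in K}$. *)

(* Defs.v *)
From HB Require Import structures.
From mathcomp Require Import all_boot all_order all_algebra.
From mathcomp Require Import all_classical all_reals all_analysis.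
Set Implicit Arguments. Unset Strict Implicit. Unset Printing Implicit Defensive.
Import Order.TTheory GRing.Theory Num.Theory.
Local Open Scope ring_scope.

Section Aggregation.
Variables (R : realType) (K : finType).

Definition trunc (lam x : R) : R := Num.min (Num.max x (- lam)) lam.

(* z_U, represented as a vector of R^K padded with zeros outside U *)
Definition restrict (U : {set K}) (z : K -> R) : K -> R :=
  fun k => if k \in U then z k else 0.

(* The map
   r^{(S)}_{U,s} : R^U -> R is represented by z |-> r S U s z, and is only
   ever applied to restricted (zero-padded) data restrict U y, so it depends
   on y only through y_U. *)
Definition online_rule := {set K} -> {set K} -> K -> (K -> R) -> R.

Variables (Ss : {set {set K}}) (r : online_rule) (lam : R)
          (rho : seq K) (y : K -> R).

(* rho[1:t] as a set : the first t revealed points (0-based steps) *)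
Definition before (t : nat) : {set K} := [set x in take t rho].

Definition expert_pred (S : {set K}) (s : K) : R :=
  let U := before (index s rho) :&: S in r S U s (restrict U y).

(* active set at step t where s = rho(t) is revealed *)
Definition active (t : nat) (s : K) : {set {set K}} :=
  [set S in Ss | (s \in S) &&
     ((t == 0)%N || [exists x in before t, x \in S])].

Definition alpha : R := 1 / (8 * lam ^+ 2).

Definition loss (S : {set K}) (s : K) : R :=
  (trunc lam (y s) - trunc lam (expert_pred S s)) ^+ 2.

Definition agg_pred (w : {set K} -> R) (t : nat) (s : K) : R :=
  let A := active t s in
  \sum_(S in A) (w S / (\sum_(S' in A) w S')) * trunc lam (expert_pred S s).

Definition update (w : {set K} -> R) (t : nat) (s : K) : {set K} -> R :=
  let A := active t s in
  fun S => if S \in A then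
     w S * expR (- alpha * loss S s)
       / (\sum_(S' in A) w S' * expR (- alpha * loss S' s))
       * (\sum_(S' in A) w S')
   else w S.

(* weights w_{.,t} before step t (0-based) *)
Fixpoint weights (t : nat) : {set K} -> R :=
  match t with
  | 0%N => fun _ => 1 / (#|Ss|%:R)
  | t'.+1 => match drop t' rho with
             | s :: _ => update (weights t') t' s
             | [::] => weights t'
             end
  end.

Definition agg_output (s : K) : R :=
  agg_pred (weights (index s rho)) (index s rho) s.

End Aggregation.

(* Main.v *)
Require Import Defs.
From HB Require Import structures.
From mathcomp Require Import all_boot all_order all_algebra.
From mathcomp Require Import all_classical all_reals all_analysis.
From mathcomp Require Import ring lra.
Import Order.TTheory GRing.Theory Num.Theory.
Import numFieldNormedType.Exports.
Local Open Scope ring_scope.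

Section Calc.
Variable R : realType.

Lemma is_derive_expR_comp (g : R -> R) (x dg : R) :
  is_derive x 1 g dg -> is_derive x 1 (fun z => expR (g z)) (expR (g x) * dg).
Proof.
move=> hg.
have dgx : derivable g x 1 := @ex_derive _ _ _ _ _ _ _ hg.
have dc : derivable (expR \o g) x 1.
  apply/derivable1_diffP; apply: differentiable_comp.
    exact/derivable1_diffP.
  exact/derivable1_diffP/derivable_expR.
apply: DeriveDef; first exact: dc.
rewrite -derive1E.
have := derive1_comp dgx (@derivable_expR _ (g x)).
rewrite /comp => ->.
by rewrite !derive1E (@derive_val _ _ _ _ _ _ _ (is_derive_expR (g x))) (@derive_val _ _ _ _ _ _ _ hg).
Qed.

Definition qf (al u : R) (z : R) := (1 + 2*al*u*(u - z)) * expR (al*(z^+2 - u^+2)).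

Lemma qf_derive (al u x : R) :
  is_derive x 1 (qf al u) (2*al*(x-u)*(1-2*al*u*x)*expR (al*(x^+2-u^+2))).
Proof.
pose P : {poly R} := (1 + 2*al*u*u)%:P - (2*al*u) *: 'X.
pose G : {poly R} := al *: 'X^2 - (al*u^+2)%:P.
have E : qf al u = (horner P) * (fun z => expR (horner G z)).
  apply/funext => z; rewrite /qf /P /G /=.
  rewrite mulrfctE !hornerE; congr (_ * expR _); first ring.
  by rewrite mulrBr !expr2 !mulrA.
rewrite E.
have hG := @is_derive_expR_comp (horner G) x _ (is_derive_poly G x).
have h := is_deriveM (is_derive_poly P x) hG.
have eG : G.[x] = al*(x^+2-u^+2).
  rewrite /G !hornerE /=. by rewrite mulrBr !expr2 !mulrA.
have dG : (deriv G).[x] = 2*al*x.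
  rewrite /G !poly.derivE !hornerE /=. ring.
have dP : (deriv P).[x] = - (2*al*u).
  rewrite /P !poly.derivE !hornerE /=. ring.
have eP : P.[x] = 1 + 2*al*u*(u - x).
  rewrite /P !hornerE /=. ring.
move: h; rewrite eG dG dP eP.
suff -> : ((1 + 2 * al * u * (u - x)) *: (expR (al * (x ^+ 2 - u ^+ 2)) * (2 * al * x)) +
   expR (al * (x ^+ 2 - u ^+ 2)) *: - (2 * al * u)) = 2 * al * (x - u) * (1 - 2 * al * u * x) * expR (al * (x ^+ 2 - u ^+ 2)) by [].
rewrite /GRing.scale /=. ring.
Qed.

Lemma qf_cont (al u : R) : continuous (fun x : R => qf al u x).
Proof.
move=> x; apply/differentiable_continuous/derivable1_diffP.
exact: (@ex_derive _ _ _ _ _ _ _ (qf_derive al u x)).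
Qed.

Lemma qf_d1 (al u x : R) : derive1 (qf al u) x = 2*al*(x-u)*(1-2*al*u*x)*expR (al*(x^+2-u^+2)).
Proof. by rewrite derive1E (@derive_val _ _ _ _ _ _ _ (qf_derive al u x)). Qed.

Lemma tangent (al u v : R) : 0 <= al ->
  (forall z, Num.min u v <= z <= Num.max u v -> 2*al*u*z <= 1) -> 1 <= qf al u v.
Proof.
move=> al0 hz.
have qu : qf al u u = 1 by rewrite /qf subrr mulr0 addr0 mul1r subrr mulr0 expR0.
have dq : forall x, derivable (qf al u) x 1.
  by move=> x; exact: (@ex_derive _ _ _ _ _ _ _ (qf_derive al u x)).
case: (leP u v) => uv.
- rewrite -qu; apply: (@ger0_derive1_ndecr _ _ u v) => //.
  + move=> x; rewrite in_itv /= => /andP [ux xv].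
    rewrite qf_d1; apply: mulr_ge0; last exact/ltW/expR_gt0.
    have := hz x; rewrite (min_l uv) (max_r uv) (ltW ux) (ltW xv) => /(_ isT) h.
    apply: mulr_ge0; last by lra.
    apply: mulr_ge0; last by lra.
    by lra.
  + by apply: continuous_subspaceT; exact: qf_cont.
- rewrite -qu; apply: (@ler0_derive1_nincr _ _ v u) => //; last exact: ltW.
  + move=> x; rewrite in_itv /= => /andP [ux xv].
    rewrite qf_d1 -mulrA; apply: mulr_le0_ge0.
      by apply: mulr_ge0_le0; lra.
    apply: mulr_ge0; last exact/ltW/expR_gt0.
    have := hz x; rewrite (min_r (ltW uv)) (max_l (ltW uv)) (ltW ux) (ltW xv) => /(_ isT) h.
    by lra.
  + by apply: continuous_subspaceT; exact: qf_cont.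
Qed.

Lemma absmix (I : finType) (A : {set I}) (p x : I -> R) (lam : R) :
  0 <= lam -> (forall i, i \in A -> 0 <= p i) -> \sum_(i in A) p i <= 1 ->
  (forall i, `|x i| <= lam) -> `|\sum_(i in A) p i * x i| <= lam.
Proof.
move=> l0 hp hs hx.
apply: le_trans (ler_norm_sum _ _ _) _.
apply: (@le_trans _ _ (\sum_(i in A) p i * lam)).
  apply: ler_sum => i iA; rewrite normrM ger0_norm ?hp //.
  by apply: ler_wpM2l; [exact: hp | exact: hx].
rewrite -mulr_suml; rewrite -[X in _ <= X]mul1r.
by apply: ler_wpM2r.
Qed.

Lemma mix (I : finType) (A : {set I}) (p x : I -> R) (a lam : R) :
  0 < lam -> (forall i, i \in A -> 0 <= p i) -> \sum_(i in A) p i = 1 ->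
  (forall i, `|x i| <= lam) -> `|a| <= lam ->
  \sum_(i in A) p i * expR (- (1 / (8 * lam ^+ 2)) * (a - x i) ^+ 2)
   <= expR (- (1 / (8 * lam ^+ 2)) * (a - \sum_(i in A) p i * x i) ^+ 2).
Proof.
move=> l0 hp hs hx ha.
set al := 1 / (8 * lam ^+ 2).
have al0 : 0 <= al by rewrite /al; apply: divr_ge0 => //; apply: mulr_ge0 => //; apply: sqr_ge0.
have al8 : al * (8 * lam ^+ 2) = 1.
  by rewrite /al mul1r mulVf // mulf_neq0 // ?pnatr_eq0 // expf_neq0 // gt_eqF.
set m := \sum_(i in A) p i * x i.
have mb : `|m| <= lam by apply: absmix => //; [exact: ltW| rewrite hs].
set u := a - m.
set E := expR (- al * u ^+ 2).
have key : forall i, expR (- al * (a - x i) ^+ 2) <= (1 + 2*al*u*(u - (a - x i))) * E.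
  move=> i; set v := a - x i.
  have hv : `|v| <= 2 * lam.
    by move: (hx i) ha; rewrite /v !ler_norml => /andP[??] /andP[??]; apply/andP; split; lra.
  have hu : `|u| <= 2 * lam.
    by move: mb ha; rewrite /u !ler_norml => /andP[??] /andP[??]; apply/andP; split; lra.
  have := @tangent al u v al0.
  have hz : forall z, Num.min u v <= z <= Num.max u v -> 2*al*u*z <= 1.
    move=> z; rewrite maxEle minEle.
    move: hv hu; rewrite !ler_norml => /andP[v1 v2] /andP[u1 u2].
    have hz2 : forall z, -(2*lam) <= z <= 2*lam -> 2*al*u*z <= 1.
      move=> w /andP [w1 w2].
      have : u * w <= 4 * lam ^+ 2.
        have f1 : 0 <= (2*lam - u) * (2*lam + w) by apply: mulr_ge0; lra.
        have f2 : 0 <= (2*lam + u) * (2*lam - w) by apply: mulr_ge0; lra.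
        nra.
      move=> uw.
      have : 2 * al * u * w <= 2 * al * (4 * lam ^+ 2).
        rewrite -mulrA; apply: ler_wpM2l => //; apply: mulr_ge0 => //.
      move=> h; apply: le_trans h _.
      have -> : 2*al*(4*lam^+2) = al*(8*lam^+2) by ring.
      by rewrite al8.
    case: ifP => _ /andP [z1 z2]; apply: hz2; apply/andP; split; lra.
  move=> /(_ hz) h1.
  rewrite /qf in h1.
  have e : expR (al * (v ^+ 2 - u ^+ 2)) * expR (- al * v ^+ 2) = E.
    by rewrite -expRD /E; congr expR; ring.
  have := ler_wpM2r (ltW (expR_gt0 (- al * v ^+ 2))) h1.
  by rewrite mul1r -[_ * expR _ * expR _]mulrA e.
apply: (@le_trans _ _ (\sum_(i in A) p i * ((1 + 2*al*u*(u - (a - x i))) * E))).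
  by apply: ler_sum => i iA; apply: ler_wpM2l; [exact: hp | exact: key].
have -> : \sum_(i in A) p i * ((1 + 2*al*u*(u - (a - x i))) * E) =
   \sum_(i in A) (E * (1 + 2*al*u*(u - a)) * p i + E * (2*al*u) * (p i * x i)).
  by apply: eq_bigr => i _; ring.
rewrite big_split /= -!mulr_sumr hs -/m /u.
by rewrite le_eqVlt; apply/orP; left; apply/eqP; ring.

Qed.
End Calc.
Section Tr.
Variable R : realType.

Lemma trunc_cases (lam x : R) : 0 <= lam ->
  (x <= -lam /\ trunc lam x = -lam) \/ (lam <= x /\ trunc lam x = lam) \/
  ((-lam <= x <= lam) /\ trunc lam x = x).
Proof.
move=> l0; rewrite /trunc maxEle minEle.
case: (leP x (-lam)) => h1.
  left; split => //; rewrite ifT //; lra.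
case: (leP lam x) => h2.
  right; left; split => //; case: ifP => //; lra.
right; right; split; first by apply/andP; split; lra.
by rewrite ifT // ltW.
Qed.

Lemma trunc_abs (lam x : R) : 0 <= lam -> `|trunc lam x| <= lam.
Proof.
move=> l0; rewrite ler_norml.
case: (trunc_cases lam x l0) => [[_ ->]|[[_ ->]|[/andP[h1 h2] ->]]]; apply/andP; split; lra.
Qed.

Lemma trunc_id (lam x : R) : `|x| <= lam -> trunc lam x = x.
Proof.
move=> h; have l0 : 0 <= lam by apply: le_trans h.
move: h; rewrite ler_norml => /andP [h1 h2].
case: (trunc_cases lam x l0) => [[h ->]|[[h ->]|[_ ->]]] //; lra.
Qed.

Lemma trunc_lip (lam x z : R) : 0 <= lam ->
  (trunc lam x - trunc lam z) ^+ 2 <= (x - z) ^+ 2.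
Proof.
move=> l0.
have H : (0 <= trunc lam x - trunc lam z /\ trunc lam x - trunc lam z <= x - z) \/
         (x - z <= trunc lam x - trunc lam z /\ trunc lam x - trunc lam z <= 0).
  case: (trunc_cases lam x l0) => [[h ->]|[[h ->]|[/andP[h1 h2] ->]]];
  case: (trunc_cases lam z l0) => [[k ->]|[[k ->]|[/andP[k1 k2] ->]]];
  (by left; lra) || (by right; lra) || (case: (leP x z) => ?; [right|left]; lra).
case: H => [[p q]|[p q]]; nra.
Qed.

Lemma sq_split (lam y m : R) : `|m| <= lam ->
  (y - m) ^+ 2 <= (trunc lam y - m) ^+ 2 + 2 * (y - trunc lam y) ^+ 2
    + 4 * lam ^+ 2 * (if lam < `|y| then 1 else 0).
Proof.
move=> hm; have l0 : 0 <= lam by apply: le_trans hm.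
move: hm; rewrite ler_norml => /andP [m1 m2].
case: ifP => hy.
  have := trunc_abs lam y l0; rewrite ler_norml => /andP [a1 a2].
  move: a1 a2; move: (trunc lam y) => a a1 a2.
  have e0 : 0 <= (2*lam - (a-m)) * (2*lam + (a-m)) by apply: mulr_ge0; lra.
  have e1 : (a - m) ^+ 2 <= 4 * lam ^+ 2 by nra.
  have e2 : 0 <= ((y - a) - (a - m)) ^+ 2 by apply: sqr_ge0.
  nra.
rewrite trunc_id; last by rewrite leNgt hy.
rewrite subrr expr0n /= mulr0 mulr0 !addr0 //.
Qed.
End Tr.

Lemma ln_e_mul (R : realType) (n : R) : 0 < n -> ln (expR 1 * n) = 1 + ln n.
Proof.
move=> n0; have := @lnM R (expR 1) n; rewrite !posrE expR_gt0 n0 => /(_ isT isT) /= ->.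
by rewrite expRK.
Qed.

Section Main.
Variables (R : realType) (K : finType) (Ss : {set {set K}}) (r : online_rule R K)
  (lam : R) (rho : seq K) (y : K -> R).
Hypothesis l1 : 1 < lam.
Hypothesis urho : uniq rho.
Hypothesis allrho : forall k : K, k \in rho.
Variable x0 : K.
Variable S : {set K}.
Hypothesis SSs : S \in Ss.

Local Notation w := (weights Ss r lam rho y).
Local Notation A := (active Ss rho).

Lemma l0 : 0 < lam.
Proof. by apply: lt_trans l1. Qed.

Lemma card_pos : (0 < #|Ss|)%N.
Proof. by rewrite card_gt0; apply/set0Pn; exists S. Qed.

Lemma active_sub {t s S'} : S' \in A t s -> S' \in Ss.
Proof. by rewrite inE => /andP []. Qed.

Lemma sum_pos (B : {set {set K}}) (f : {set K} -> R) S' :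
  S' \in B -> (forall S'', 0 < f S'') -> 0 < \sum_(S'' in B) f S''.
Proof.
move=> SB hf; rewrite (bigD1 S') //=.
have : 0 <= \sum_(i in B | i != S') f i by apply: sumr_ge0 => i _; exact/ltW.
have := hf S'; lra.
Qed.

Lemma w_step t : (t < size rho)%N ->
  w t.+1 = update Ss r lam rho y (w t) t (nth x0 rho t).
Proof. by move=> lt; rewrite /= (drop_nth x0 lt). Qed.

Lemma w_pos t S' : 0 < w t S'.
Proof.
elim: t S' => [|t IH] S'.
  by rewrite /= mul1r invr_gt0 ltr0n card_pos.
case: (ltnP t (size rho)) => lt; last by rewrite /= drop_oversize.
rewrite w_step // /update; case: ifP => // SA.
apply: mulr_gt0; last exact: sum_pos SA _.
apply: divr_gt0; first by apply: mulr_gt0 => //; exact: expR_gt0.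
by apply: sum_pos SA _ => S''; apply: mulr_gt0 => //; exact: expR_gt0.
Qed.

Lemma sum_active t s (f : {set K} -> R) :
  \sum_(S' in Ss | S' \in A t s) f S' = \sum_(S' in A t s) f S'.
Proof.
apply: eq_bigl => S'; case SA: (S' \in A t s); last by rewrite andbF.
by rewrite (active_sub SA).
Qed.

Lemma w_sum t : \sum_(S' in Ss) w t S' = 1.
Proof.
elim: t => [|t IH].
  rewrite /= sumr_const mul1r -[X in X *+ _]mulr1 -mulrnAr mulVf //.
  by rewrite pnatr_eq0 -lt0n card_pos.
case: (ltnP t (size rho)) => lt; last by rewrite /= drop_oversize.
rewrite w_step // -IH.
set s := nth x0 rho t.
rewrite (bigID (fun S' => S' \in A t s)) [RHS](bigID (fun S' => S' \in A t s)) /=.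
congr (_ + _); last first.
  by apply: eq_bigr => S' /andP [_ /negbTE h]; rewrite /update h.
rewrite !sum_active.
rewrite (eq_bigr (fun S' => w t S' * expR (- alpha lam * loss r lam rho y S' s) /
   (\sum_(S' in A t s) w t S' * expR (- alpha lam * loss r lam rho y S' s)) *
   (\sum_(S' in A t s) w t S'))); last by move=> S' h; rewrite /update h.
have [->|[S1 S1A]] := set_0Vmem (A t s); first by rewrite !big_set0.
rewrite -mulr_suml -mulr_suml mulfV ?mul1r //.
apply: lt0r_neq0; apply: sum_pos S1A _ => S''.
by apply: mulr_gt0; [exact: w_pos | exact: expR_gt0].
Qed.

Lemma w_le1 t : w t S <= 1.
Proof.
rewrite -(w_sum t) (bigD1 S) //=.
have : 0 <= \sum_(i in Ss | i != S) w t i by apply: sumr_ge0 => i _; exact/ltW/w_pos.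
lra.
Qed.

Lemma agg_bound (W : {set K} -> R) t s : (forall S', 0 < W S') ->
  `|agg_pred Ss r lam rho y W t s| <= lam.
Proof.
move=> hW; rewrite /agg_pred.
apply: (@absmix _ _ _ (fun S' => W S' / \sum_(S'' in A t s) W S'')
    (fun S' => trunc lam (expert_pred r rho y S' s))).
- exact/ltW/l0.
- by move=> i _; apply: divr_ge0; [exact/ltW | apply: sumr_ge0 => j _; exact/ltW].
- rewrite -mulr_suml.
  have [->|ne] := eqVneq (\sum_(S'' in A t s) W S'') 0; first by rewrite invr0 mulr0.
  by rewrite mulfV.
- by move=> i; apply: trunc_abs; exact/ltW/l0.
Qed.


Definition Gf (s : K) : R :=
  if S \in A (index s rho) s then
    (trunc lam (y s) - agg_output Ss r lam rho y s) ^+ 2 - loss r lam rho y S s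
  else 0.

Definition Dsum t := \sum_(s | (index s rho < t)%N) Gf s.

Lemma Dsum_step t : (t < size rho)%N -> Dsum t.+1 = Dsum t + Gf (nth x0 rho t).
Proof.
move=> lt; rewrite /Dsum (bigD1 (nth x0 rho t)) /=; last by rewrite index_uniq.
rewrite addrC; congr (_ + _); apply: eq_bigl => k.
rewrite ltnS leq_eqVlt; case: eqP => [e|ne] /=.
  by rewrite -e nth_index // eqxx e ltnn.
case: eqP => [ek|] //=; first by rewrite ek index_uniq // in ne.
by rewrite andbT.
Qed.

Lemma alpha_pos : 0 < alpha lam.
Proof.
rewrite /alpha; apply: divr_gt0 => //; apply: mulr_gt0 => //.
by apply: exprn_gt0; exact: l0.
Qed.

Lemma lower t : (t <= size rho)%N ->
  1 / #|Ss|%:R * expR (alpha lam * Dsum t) <= w t S.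
Proof.
elim: t => [_|t IH lt].
  rewrite /Dsum big_pred0; last by move=> k; rewrite ltn0.
  by rewrite mulr0 expR0 mulr1.
have IH' := IH (ltnW lt).
rewrite Dsum_step // w_step //.
set s := nth x0 rho t.
have its : index s rho = t by rewrite index_uniq.
rewrite /Gf its /update /agg_output its.
case: ifP => SA; last by rewrite addr0.
set m := agg_pred Ss r lam rho y (w t) t s.
set Wt := \sum_(S' in A t s) w t S'.
set Dn := \sum_(S' in A t s) w t S' * expR (- alpha lam * loss r lam rho y S' s).
set lh := (trunc lam (y s) - m) ^+ 2.
set lS := loss r lam rho y S s.
have Wt0 : 0 < Wt by apply: sum_pos SA _ => S'; exact: w_pos.
have Dn0 : 0 < Dn.
  by apply: sum_pos SA _ => S''; apply: mulr_gt0; [exact: w_pos | exact: expR_gt0].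
have hmix : Dn <= Wt * expR (- alpha lam * lh).
  have E1 : Dn = Wt * \sum_(S' in A t s) (w t S' / Wt) *
      expR (- (1 / (8 * lam ^+ 2)) * (trunc lam (y s) - trunc lam (expert_pred r rho y S' s)) ^+ 2).
    rewrite mulr_sumr; apply: eq_bigr => S' _.
    rewrite /loss /alpha; symmetry; rewrite [w t S' / Wt]mulrC !mulrA mulfV ?mul1r //; exact: lt0r_neq0.
  rewrite E1; apply: ler_wpM2l; first exact: ltW.
  rewrite /lh /m /agg_pred /alpha.
  apply: (@mix _ _ _ (fun S' => w t S' / Wt) (fun S' => trunc lam (expert_pred r rho y S' s))).
  - exact: l0.
  - by move=> i _; apply: divr_ge0; [exact/ltW/w_pos | exact: ltW].
  - by rewrite -mulr_suml mulfV //; exact: lt0r_neq0.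
  - by move=> i; apply: trunc_abs; exact/ltW/l0.
  - by apply: trunc_abs; exact/ltW/l0.
have step1 : w t S * expR (- alpha lam * lS) * expR (alpha lam * lh) <=
    w t S * expR (- alpha lam * lS) / Dn * Wt.
  rewrite [X in _ <= X]mulrAC ler_pdivlMr //.
  apply: (@le_trans _ _ (w t S * expR (- alpha lam * lS) * expR (alpha lam * lh) *
     (Wt * expR (- alpha lam * lh)))).
    apply: ler_wpM2l => //; apply: mulr_ge0; [apply: mulr_ge0 |]; apply/ltW; [exact: w_pos|exact: expR_gt0|exact: expR_gt0].
  rewrite le_eqVlt; apply/orP; left; apply/eqP.
  have ee : expR (alpha lam * lh) * expR (- alpha lam * lh) = 1.
    by rewrite -expRD mulNr addrN expR0.
  transitivity (w t S * expR (- alpha lam * lS) * Wt *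
     (expR (alpha lam * lh) * expR (- alpha lam * lh))); first by ring.
  by rewrite ee mulr1.
apply: le_trans step1.
have -> : alpha lam * (Dsum t + (lh - lS)) = alpha lam * Dsum t + (- alpha lam * lS) + alpha lam * lh by ring.
rewrite !expRD !mulrA.
apply: ler_wpM2r; first exact/ltW/expR_gt0.
apply: ler_wpM2r; first exact/ltW/expR_gt0.
exact: IH'.
Qed.


Lemma Dsum_all : Dsum (size rho) = \sum_(s in S) Gf s.
Proof.
rewrite /Dsum (eq_bigl xpredT); last by move=> k; rewrite index_mem allrho.
rewrite (bigID (fun s => s \in S)) /= [X in _ + X]big1 ?addr0 //.
move=> s /negbTE sS; rewrite /Gf inE sS /= andbF //.
Qed.

Lemma Dsum_bound : Dsum (size rho) <= 8 * lam ^+ 2 * ln (#|Ss|%:R).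
Proof.
have h1 := @lower (size rho) (leqnn (size rho)).
have h2 := w_le1 (size rho).
have n0 : (0 : R) < #|Ss|%:R by rewrite ltr0n card_pos.
have h3 : expR (alpha lam * Dsum (size rho)) <= #|Ss|%:R.
  have := le_trans h1 h2; rewrite mul1r ler_pdivrMl // mulr1.
  by [].
have h4 : alpha lam * Dsum (size rho) <= ln (#|Ss|%:R).
  by rewrite -[X in X <= _]expRK ler_ln // posrE ?expR_gt0.
have a8 : 8 * lam ^+ 2 * alpha lam = 1.
  rewrite /alpha mul1r mulfV // mulf_neq0 // ?pnatr_eq0 // expf_neq0 //.
  exact/lt0r_neq0/l0.
have -> : Dsum (size rho) = 8 * lam^+2 * (alpha lam * Dsum (size rho)) by rewrite mulrA a8 mul1r.
apply: ler_wpM2l => //.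
apply: mulr_ge0 => //; apply: sqr_ge0.
Qed.

Lemma inact_unique s1 s2 : s1 \in S -> s2 \in S ->
  S \notin A (index s1 rho) s1 -> S \notin A (index s2 rho) s2 -> s1 = s2.
Proof.
move=> s1S s2S.
rewrite !inE SSs s1S s2S /= !negb_or => /andP [_ n1] /andP [_ n2].
case: (ltngtP (index s1 rho) (index s2 rho)) => lt.
- case/negP: n2; apply/existsP; exists s1.
  by rewrite !inE (in_take _ (allrho s1)) lt s1S.
- case/negP: n1; apply/existsP; exists s2.
  by rewrite !inE (in_take _ (allrho s2)) lt s2S.
- by rewrite -(nth_index x0 (allrho s1)) lt nth_index.
Qed.

Lemma c_sum : \sum_(s in S) (if S \in A (index s rho) s then 0 else 4 * lam ^+ 2) <= 4 * lam ^+ 2.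
Proof.
have l4 : (0:R) <= 4 * lam ^+ 2 by apply: mulr_ge0 => //; apply: sqr_ge0.
case: (boolP [exists s in S, S \notin A (index s rho) s]).
- move/existsP => [s0 /andP [s0S s0n]].
  rewrite (bigD1 s0) //= (negbTE s0n) big1 ?addr0 //.
  move=> s /andP [sS ne]; case: ifP => // /negbT sn.
  by rewrite (@inact_unique s s0 sS s0S sn s0n) eqxx in ne.
- move=> /existsPn h; rewrite big1 //.
  by move=> s sS; have := h s; rewrite sS /= negbK => ->.
Qed.

Lemma main_ineq :
  \sum_(s in S) (y s - agg_output Ss r lam rho y s) ^+ 2 <=
    \sum_(s in S) (y s - expert_pred r rho y S s) ^+ 2
    + 8 * lam ^+ 2 * ln (expR 1 * (#|Ss|%:R))
    + 2 * \sum_(s in S) (y s - trunc lam (y s)) ^+ 2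
    + 4 * lam ^+ 2 * \sum_(s in S) (if lam < `|y s| then 1 else 0).
Proof.
have l0' : 0 <= lam by exact/ltW/l0.
have per : forall s, s \in S ->
  (y s - agg_output Ss r lam rho y s) ^+ 2 <=
  ((y s - expert_pred r rho y S s) ^+ 2 + Gf s
   + (if S \in A (index s rho) s then 0 else 4 * lam ^+ 2))
  + 2 * (y s - trunc lam (y s)) ^+ 2
  + 4 * lam ^+ 2 * (if lam < `|y s| then 1 else 0).
  move=> s sS.
  have hm : `|agg_output Ss r lam rho y s| <= lam.
    by apply: agg_bound => S'; exact: w_pos.
  have := @sq_split R lam (y s) _ hm.
  have : (trunc lam (y s) - agg_output Ss r lam rho y s) ^+ 2 <=
     (y s - expert_pred r rho y S s) ^+ 2 + Gf s
      + (if S \in A (index s rho) s then 0 else 4 * lam ^+ 2).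
    rewrite /Gf; case: ifP => act.
      have := @trunc_lip R lam (y s) (expert_pred r rho y S s) l0'.
      rewrite /loss. lra.
    move: (@trunc_abs R lam (y s) l0') hm; rewrite !ler_norml => /andP [a1 a2] /andP [m1 m2].
    move: a1 a2 m1 m2; move: (trunc lam (y s)) (agg_output Ss r lam rho y s) => a m a1 a2 m1 m2.
    have e0 : 0 <= (2*lam - (a-m)) * (2*lam + (a-m)) by apply: mulr_ge0; lra.
    have := sqr_ge0 (y s - expert_pred r rho y S s).
    nra.
  lra.
apply: le_trans (ler_sum _ per) _.
rewrite !big_split /= -!mulr_sumr.
have h1 : \sum_(s in S) Gf s <= 8 * lam ^+ 2 * ln (#|Ss|%:R) by rewrite -Dsum_all; exact: Dsum_bound.
have h2 := c_sum.
have h3 : ln (expR 1 * (#|Ss|%:R : R)) = 1 + ln (#|Ss|%:R : R).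
  have n0 : (0:R) < #|Ss|%:R by rewrite ltr0n card_pos.
  exact: (@ln_e_mul R _ n0).
rewrite h3 mulrDr mulr1.
have := sqr_ge0 lam; lra.
Qed.

End Main.

Theorem mainTheorem1 (R : realType) (K : finType) (Ss : {set {set K}})
    (r : online_rule R K) (lam : R) (y : K -> R) (rho : seq K) :
  (forall S, S \in Ss -> S != finset.set0) ->
  1 < lam ->
  uniq rho -> (forall k : K, k \in rho) ->
  forall S, S \in Ss ->
  \sum_(s in S) (y s - agg_output Ss r lam rho y s) ^+ 2 <=
    \sum_(s in S) (y s - expert_pred r rho y S s) ^+ 2
    + 8 * lam ^+ 2 * ln (expR 1 * (#|Ss|%:R))
    + 2 * \sum_(s in S) (y s - trunc lam (y s)) ^+ 2
    + 4 * lam ^+ 2 * \sum_(s in S) (if lam < `|y s| then 1 else 0).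
Proof.
move=> hne l1 urho allrho S SSs.
have /set0Pn [x0 _] := hne S SSs.
exact: (@main_ineq R K Ss r lam rho y l1 urho allrho x0 S SSs).
Qed.
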